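(* Let $0<a,b<1$, $P_1=T_1$, $P_2>0$. Consider the scheme where user 1 sends only a private Gaussian message of power $P_1$ and user 2 sends a public Gaussian message of power $P_2-\hat P_2$ and a private Gaussian message of power $\hat P_2$, with $\hat P_2\in[0,P_2]$; user 2's public message is decoded first at both receivers treating all other signals as noise, at the largest rate decodable at both receivers, and then the private messages are decoded treating the remaining interference as noise. Then for every $\hat P_2\in[0,P_2]$ the rate of user 2's public message is limited by receiver 1, and the sum-rate equals $\tfrac12\log_2(T_1+aP_2+1)$, independent of $\hat P_2$. Symmetrically, if $P_2=T_2$ the analogous scheme with roles of the users exchanged gives sum-rate $\tfrac12\log_2(T_2+bP_1+1)$ independent of the split of user 1's power.
   Context: Weak GIC $Y_1=X_1+\sqrt aX_2+Z_1$, $Y_2=\sqrt bX_1+X_2+Z_2$ with $Z_i\sim N(0,1)$ independent of inputs; $T_1=\frac{1-a}{ab}$, $T_2=\frac{1-b}{ab}$. *)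

(* Defs.v *)
From Stdlib Require Import Reals.
Open Scope R_scope.

Definition log2 (x : R) : R := ln x / ln 2.

Definition gcap (snr : R) : R := / 2 * log2 (1 + snr).

(* Weak Gaussian IC:  Y1 = X1 + sqrt a X2 + Z1,  Y2 = sqrt b X1 + X2 + Z2. *)
Definition T1 (a b : R) : R := (1 - a) / (a * b).
Definition T2 (a b : R) : R := (1 - b) / (a * b).

(* ---- Scheme 1: user 1 private only (power P1); user 2 public power
   P2 - Q2 and private power Q2.  Public message of user 2 decoded first at
   both receivers, treating everything else as noise. *)

Definition s1_pub_rx1 (a b P1 P2 Q2 : R) : R :=
  gcap (a * (P2 - Q2) / (P1 + a * Q2 + 1)).
Definition s1_pub_rx2 (a b P1 P2 Q2 : R) : R :=
  gcap ((P2 - Q2) / (b * P1 + Q2 + 1)).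
Definition s1_pub (a b P1 P2 Q2 : R) : R :=
  Rmin (s1_pub_rx1 a b P1 P2 Q2) (s1_pub_rx2 a b P1 P2 Q2).
Definition s1_priv1 (a b P1 P2 Q2 : R) : R := gcap (P1 / (a * Q2 + 1)).
Definition s1_priv2 (a b P1 P2 Q2 : R) : R := gcap (Q2 / (b * P1 + 1)).
Definition s1_sum (a b P1 P2 Q2 : R) : R :=
  s1_pub a b P1 P2 Q2 + s1_priv1 a b P1 P2 Q2 + s1_priv2 a b P1 P2 Q2.

Definition s2_pub_rx1 (a b P1 P2 Q1 : R) : R :=
  gcap ((P1 - Q1) / (a * P2 + Q1 + 1)).
Definition s2_pub_rx2 (a b P1 P2 Q1 : R) : R :=
  gcap (b * (P1 - Q1) / (P2 + b * Q1 + 1)).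
Definition s2_pub (a b P1 P2 Q1 : R) : R :=
  Rmin (s2_pub_rx1 a b P1 P2 Q1) (s2_pub_rx2 a b P1 P2 Q1).
Definition s2_priv1 (a b P1 P2 Q1 : R) : R := gcap (Q1 / (a * P2 + 1)).
Definition s2_priv2 (a b P1 P2 Q1 : R) : R := gcap (P2 / (b * Q1 + 1)).
Definition s2_sum (a b P1 P2 Q1 : R) : R :=
  s2_pub a b P1 P2 Q1 + s2_priv1 a b P1 P2 Q1 + s2_priv2 a b P1 P2 Q1.

(* Main.v *)
Require Import Defs.
From Stdlib Require Import Reals Lra Psatz.
Open Scope R_scope.

Lemma frac_le (u v A B : R) : 0 < A -> 0 < B -> u * B <= v * A -> u / A <= v / B.
Proof.
  intros HA HB H.
  replace (u / A) with ((u * B) * / (A * B)) by (field; lra).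
  replace (v / B) with ((v * A) * / (A * B)) by (field; lra).
  apply Rmult_le_compat_r; [apply Rlt_le, Rinv_0_lt_compat; nra | exact H].
Qed.

Lemma gcap_le (x y : R) : -1 < x -> x <= y -> gcap x <= gcap y.
Proof.
  intros H1 H2. unfold gcap, log2.
  assert (Hl : 0 < ln 2) by (pose proof ln_lt_2; lra).
  apply Rmult_le_compat_l; [lra|].
  unfold Rdiv. apply Rmult_le_compat_r; [apply Rlt_le, Rinv_0_lt_compat; lra|].
  destruct (Req_dec x y) as [->|]; [lra|]. apply Rlt_le, ln_increasing; lra.
Qed.

Lemma gcap3 (x y z : R) : -1 < x -> -1 < y -> -1 < z ->
  gcap x + gcap y + gcap z = / 2 * log2 ((1 + x) * (1 + y) * (1 + z)).
Proof.
  intros. unfold gcap, log2.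
  rewrite !ln_mult; try nra.
Qed.

Theorem mainTheorem9 (a b : R) (ha : 0 < a < 1) (hb : 0 < b < 1) :
  (forall P1 P2 : R, P1 = T1 a b -> 0 < P2 ->
     forall Q2 : R, 0 <= Q2 <= P2 ->
       s1_pub a b P1 P2 Q2 = s1_pub_rx1 a b P1 P2 Q2 /\
       s1_sum a b P1 P2 Q2 = / 2 * log2 (T1 a b + a * P2 + 1)) /\
  (forall P1 P2 : R, P2 = T2 a b -> 0 < P1 ->
     forall Q1 : R, 0 <= Q1 <= P1 ->
       s2_pub a b P1 P2 Q1 = s2_pub_rx2 a b P1 P2 Q1 /\
       s2_sum a b P1 P2 Q1 = / 2 * log2 (T2 a b + b * P1 + 1)).
Proof.
  split.
  - intros P1 P2 HP1 HP2 Q2 HQ.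
    assert (HabP : a * b * P1 = 1 - a) by (subst; unfold T1; field; nra).
    assert (P1pos : 0 < P1) by (subst; unfold T1; apply Rdiv_lt_0_compat; nra).
    assert (Hrx : s1_pub_rx1 a b P1 P2 Q2 <= s1_pub_rx2 a b P1 P2 Q2).
    { unfold s1_pub_rx1, s1_pub_rx2. apply gcap_le.
      - apply Rlt_le_trans with 0; [lra|]. unfold Rdiv.
        apply Rmult_le_pos; [nra| apply Rlt_le, Rinv_0_lt_compat; nra].
      - apply frac_le; try nra. }
    split.
    + unfold s1_pub. apply Rmin_left. exact Hrx.
    + unfold s1_sum, s1_pub. rewrite Rmin_left by exact Hrx.
      unfold s1_pub_rx1, s1_priv1, s1_priv2.
      rewrite gcap3.
      * rewrite <- HP1. do 2 f_equal.
        assert (Hb : b = (1 - a) / (a * P1)) by (field_simplify_eq; nra).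
        assert (0 < a * Q2 + 1) by nra.
        assert (0 < P1 + a * Q2 + 1) by nra.
        assert (0 < b * P1 + 1) by nra.
        rewrite Hb. field. repeat split; try nra.
      * apply Rlt_le_trans with 0; [lra|]. unfold Rdiv.
        apply Rmult_le_pos; [nra| apply Rlt_le, Rinv_0_lt_compat; nra].
      * apply Rlt_le_trans with 0; [lra|]. unfold Rdiv.
        apply Rmult_le_pos; [nra| apply Rlt_le, Rinv_0_lt_compat; nra].
      * apply Rlt_le_trans with 0; [lra|]. unfold Rdiv.
        apply Rmult_le_pos; [nra| apply Rlt_le, Rinv_0_lt_compat; nra].
  - intros P1 P2 HP2 HP1 Q1 HQ.
    assert (HabP : a * b * P2 = 1 - b) by (subst; unfold T2; field; nra).
    assert (P2pos : 0 < P2) by (subst; unfold T2; apply Rdiv_lt_0_compat; nra).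
    assert (Hrx : s2_pub_rx2 a b P1 P2 Q1 <= s2_pub_rx1 a b P1 P2 Q1).
    { unfold s2_pub_rx1, s2_pub_rx2. apply gcap_le.
      - apply Rlt_le_trans with 0; [lra|]. unfold Rdiv.
        apply Rmult_le_pos; [nra| apply Rlt_le, Rinv_0_lt_compat; nra].
      - apply frac_le; try nra. }
    split.
    + unfold s2_pub. apply Rmin_right. exact Hrx.
    + unfold s2_sum, s2_pub. rewrite Rmin_right by exact Hrx.
      unfold s2_pub_rx2, s2_priv1, s2_priv2.
      rewrite gcap3.
      * rewrite <- HP2. do 2 f_equal.
        assert (Ha : a = (1 - b) / (b * P2)) by (field_simplify_eq; nra).
        assert (0 < b * Q1 + 1) by nra.
        assert (0 < P2 + b * Q1 + 1) by nra.
        assert (0 < a * P2 + 1) by nra.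
        rewrite Ha. field. repeat split; try nra.
      * apply Rlt_le_trans with 0; [lra|]. unfold Rdiv.
        apply Rmult_le_pos; [nra| apply Rlt_le, Rinv_0_lt_compat; nra].
      * apply Rlt_le_trans with 0; [lra|]. unfold Rdiv.
        apply Rmult_le_pos; [nra| apply Rlt_le, Rinv_0_lt_compat; nra].
      * apply Rlt_le_trans with 0; [lra|]. unfold Rdiv.
        apply Rmult_le_pos; [nra| apply Rlt_le, Rinv_0_lt_compat; nra].
Qed.
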